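(* Let $x=(x_1,\dots,x_5)\in\mathbb{Z}_{\ge 0}^5$ and let $y=(y_1,\dots,y_5)$ be obtained from $x$ by a move of the exact $(5,2)$ nim, i.e. there are two distinct indices $a\neq b$ with $y_a<x_a$, $y_b<x_b$, and $y_c=x_c$ for all $c\notin\{a,b\}$. Suppose the move changes the leader, i.e. there is an index $i\in\{a,b\}$ with $x_i=\max_{1\le c\le 5}x_c$ and $y_i<\max_{1\le c\le 5}y_c$. Then it is not the case that both $\hat x$ and $\hat y$ are P-positions of Moore's nim $(4,\le 2)$. In other words, there is no move in the exact $(5,2)$ nim from a $*P$ position to a $*P$ position that changes the leader.
   Context: Positions of the exact $(5,2)$ nim are vectors of $5$ nonnegative integers (pile sizes); a move consists of choosing exactly two piles and removing a positive number of stones from each of them. For a position $z\in\mathbb{Z}_{\ge0}^5$, the reduced position $\hat z\in\mathbb{Z}_{\ge0}^4$ is the multiset of pile sizes obtained from $z$ by deleting one copy of its maximum pile (the ''leader''); equivalently, if $z$ is sorted as $z_{(1)}\le\dots\le z_{(5)}$, then $\hat z=(z_{(1)},z_{(2)},z_{(3)},z_{(4)})$. Moore's nim $(4,\le 2)$ is played on $4$ piles, a move removing a positive number of stones from at least one and at most two piles; the player unable to move loses. A position $w=(w_1,\dots,w_4)$ of it is a P-position iff for every bit position $j\ge 0$ the number of indices $r\in\{1,2,3,4\}$ whose $j$-th binary digit of $w_r$ equals $1$ is divisible by $3$ (i.e. equals $0$ or $3$). A position $z$ of the exact $(5,2)$ nim is called $*P$ if $\hat z$ is a P-position of Moore's nim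 $(4,\le 2)$. *)

(* Defs.v *)
From mathcomp Require Import all_boot all_order.
Set Implicit Arguments. Unset Strict Implicit. Unset Printing Implicit Defensive.

Definition pos5 := 'I_5 -> nat.

Definition maxpile (z : pos5) : nat := \max_(c : 'I_5) z c.

(* Reduced position: the pile sizes sorted increasingly, with the last
   (one copy of the maximum, the "leader") removed: (z_(1),...,z_(4)). *)
Definition reduced (z : pos5) : seq nat :=
  take 4 (sort leq [seq z c | c : 'I_5]).

Definition bit (j n : nat) : bool := odd (n %/ 2 ^ j).

Definition moore_P (w : seq nat) : Prop :=
  size w = 4 /\ forall j : nat, 3 %| count (bit j) w.

Definition starP (z : pos5) : Prop := moore_P (reduced z).

Definition move52 (x y : pos5) (a b : 'I_5) : Prop :=
  [/\ a != b, y a < x a, y b < x b & forall c, c != a -> c != b -> y c = x c].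

(* Main.v *)
Require Import Defs.
From mathcomp Require Import all_boot all_order zify.
Lemma count_img (z : pos5) (P : pred nat) :
  count P [seq z c | c : 'I_5] = \sum_(c < 5) P (z c).
Proof.
rewrite /image_mem count_map -sum1_count big_mkcond /=.
rewrite /enum_mem (eq_filter (a2 := predT)) // filter_predT.
rewrite (eq_bigr (fun i => nat_of_bool (P (z i)))); last by move=> i _; case: (P _).
by rewrite /index_enum unlock.
Qed.

Lemma maxpile_nth (z : pos5) :
  nth 0 (sort leq [seq z c | c : 'I_5]) 4 = maxpile z.
Proof.
set s := sort leq _.
have Hs : size s = 5 by rewrite size_sort size_image card_ord.
have Hp : perm_eq s [seq z c | c : 'I_5] by rewrite /s perm_sort.
have Hso : sorted leq s by apply: sort_sorted; exact: leq_total.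
apply/eqP; rewrite eqn_leq; apply/andP; split.
- have : nth 0 s 4 \in s by rewrite mem_nth // Hs.
  rewrite (perm_mem Hp) => /mapP [c _ ->]. exact: leq_bigmax.
- rewrite /maxpile; have [k ->] := eq_bigmax z (ltac:(by rewrite card_ord) : 0 < #|'I_5|) .
  have Hk : z k \in s by rewrite (perm_mem Hp); apply: map_f; rewrite mem_enum.
  rewrite -(nth_index 0 Hk).
  have Hi : index (z k) s < 5 by rewrite -Hs index_mem.
  apply: (sorted_leq_nth leq_trans leqnn 0 Hso); rewrite ?inE ?Hs //.
Qed.

Lemma reduced_count (z : pos5) (P : pred nat) :
  count P (reduced z) + P (maxpile z) = \sum_(c < 5) P (z c).
Proof.
rewrite -count_img -maxpile_nth /reduced.
have Hp : perm_eq (sort leq [seq z c | c : 'I_5]) [seq z c | c : 'I_5] by rewrite perm_sort.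
rewrite -(permP Hp).
have : size (sort leq [seq z c | c : 'I_5]) = 5 by rewrite size_sort size_image card_ord.
case: (sort leq _) => [|a0 [|a1 [|a2 [|a3 [|a4 [|a5 s]]]]]] //= _.
lia.
Qed.

Lemma bit0n a : bit 0 a = odd a.
Proof. by rewrite /bit expn0 divn1. Qed.

Lemma bitn0 t : bit t 0 = false.
Proof. by rewrite /bit div0n. Qed.

Lemma bitS j a : bit j.+1 a = bit j (a %/ 2).
Proof. by rewrite /bit expnS divnMA. Qed.

Lemma bits_sum a0 b0 c0 d0 :
  (forall j, bit j a0 + bit j b0 = bit j c0 + bit j d0) -> a0 + b0 = c0 + d0.
Proof.
suff: forall n a b c d, a + b + c + d <= n ->
  (forall j, bit j a + bit j b = bit j c + bit j d) -> a + b = c + d.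
  by move=> /(_ (a0 + b0 + c0 + d0) a0 b0 c0 d0 (leqnn _)).
move=> n; elim: n => [|n IH] a b c d Hn H.
  lia.
have H0 := H 0; rewrite !bit0n -!modn2 in H0.
have H1 : a %/ 2 + b %/ 2 = c %/ 2 + d %/ 2.
  apply: IH; first lia.
  by move=> j; rewrite -!bitS.
lia.
Qed.

Lemma core u1 u2 v1 v2 (K : nat -> nat) :
  (forall j, 3 %| bit j u1 + bit j u2 + K j) ->
  (forall j, 3 %| bit j v1 + bit j v2 + K j) -> u1 + u2 = v1 + v2.
Proof.
move=> Hu Hv; apply: bits_sum => j.
move: (Hu j) (Hv j).
case: (bit j u1); case: (bit j u2); case: (bit j v1); case: (bit j v2) => /=; lia.
Qed.

Lemma split2 (f : 'I_5 -> nat) i j : i != j ->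
  \sum_(c < 5) f c = f i + f j + \sum_(c < 5 | (c != i) && (c != j)) f c.
Proof.
move=> Hij; rewrite (bigD1 i) //= (bigD1 j) //=; last by rewrite eq_sym.
rewrite addnA; congr (_ + _); apply: eq_bigl => c; by rewrite andbC.
Qed.

Lemma split3 (f : 'I_5 -> nat) i j k : i != j -> k != i -> k != j ->
  \sum_(c < 5) f c = f i + f j + f k +
     \sum_(c < 5 | [&& c != i, c != j & c != k]) f c.
Proof.
move=> Hij Hki Hkj; rewrite (split2 _ _ _ Hij) (bigD1 k) /=; last by rewrite Hki Hkj.
rewrite !addnA; congr (_ + _); apply: eq_bigl => c; by rewrite andbA.
Qed.

Theorem lemma11 (x y : 'I_5 -> nat) (a b i : 'I_5) :
  move52 x y a b ->
  (i = a \/ i = b) ->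
  x i = maxpile x ->
  y i < maxpile y ->
  ~ (starP x /\ starP y).
Proof.
move=> [Hab Ha Hb Hc] Hi Hxi Hyi [[_ Px] [_ Py]].
have [j [Hij Hi' Hj' Hc']] : exists j, [/\ i != j, y i < x i, y j < x j &
    forall c, c != i -> c != j -> y c = x c].
  case: Hi => ->; [exists b | exists a]; split => //; first by rewrite eq_sym.
  by move=> c H1 H2; apply: Hc.
have [k Hk] := eq_bigmax y (ltac:(by rewrite card_ord) : 0 < #|'I_5|).
rewrite -/(maxpile y) in Hk.
have Cx t : count (bit t) (reduced x) + bit t (x i) = \sum_(c < 5) bit t (x c).
  by rewrite Hxi reduced_count.
have Cy t : count (bit t) (reduced y) + bit t (y k) = \sum_(c < 5) bit t (y c).
  by rewrite -Hk reduced_count.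
have Hki : k != i by apply/eqP => E; move: Hyi; rewrite Hk E ltnn.
case: (eqVneq k j) => [Ekj | Hkj].
- subst k.
  have E := @core (x j) 0 (y i) 0 (fun t => \sum_(c < 5 | (c != i) && (c != j)) bit t (x c)).
  have : x j + 0 = y i + 0.
    apply: E => t /=; rewrite bitn0 addn0.
    + move: (Px t) (Cx t); rewrite (split2 _ _ _ Hij) => H1 H2.
      have -> : bit t (x j) + \sum_(c < 5 | (c != i) && (c != j)) bit t (x c)
        = count (bit t) (reduced x) by lia.
      exact: H1.
    + move: (Py t) (Cy t); rewrite (split2 _ _ _ Hij) => H1 H2.
      have E2 : \sum_(c < 5 | (c != i) && (c != j)) bit t (y c) =
                \sum_(c < 5 | (c != i) && (c != j)) bit t (x c).
        by apply: eq_bigr => c /andP [h1 h2]; rewrite Hc'.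
      have -> : bit t (y i) + \sum_(c < 5 | (c != i) && (c != j)) bit t (x c)
        = count (bit t) (reduced y) by lia.
      exact: H1.
  lia.
- have Eyk : y k = x k by apply: Hc'.
  have E := @core (x j) (x k) (y j) (y i)
     (fun t => \sum_(c < 5 | [&& c != i, c != j & c != k]) bit t (x c)).
  have : x j + x k = y j + y i.
    apply: E => t /=.
    + move: (Px t) (Cx t); rewrite (split3 _ _ _ _ Hij Hki Hkj) => H1 H2.
      have -> : bit t (x j) + bit t (x k) + \sum_(c < 5 | [&& c != i, c != j & c != k]) bit t (x c)
        = count (bit t) (reduced x) by lia.
      exact: H1.
    + move: (Py t) (Cy t); rewrite (split3 _ _ _ _ Hij Hki Hkj) => H1 H2.
      have E2 : \sum_(c < 5 | [&& c != i, c != j & c != k]) bit t (y c) =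
                \sum_(c < 5 | [&& c != i, c != j & c != k]) bit t (x c).
        by apply: eq_bigr => c /and3P [h1 h2 h3]; rewrite Hc'.
      have -> : bit t (y j) + bit t (y i) + \sum_(c < 5 | [&& c != i, c != j & c != k]) bit t (x c)
        = count (bit t) (reduced y) by lia.
      exact: H1.
  lia.
Qed.
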